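(* Let $(X,\le)$ be a poset, $E$ an equivalence relation on $X$ with ${\le}\subseteq E$, and $\alpha:X\to X$ an order automorphism of $(X,\le)$ with $\alpha\subseteq E$. Set $0=\alpha\circ({\le}^c)^\smile=({\le}^c)^\smile\circ\alpha$. Then for all $R\in\mathsf{Up}(\mathbf E)$: (i) ${\sim}^nR=(\alpha^\smile)^{\frac{n-1}{2}}\circ(R^c)^\smile\circ\alpha^{\frac{n+1}{2}}$ for all odd $n\ge1$; (ii) ${\sim}^nR=(\alpha^\smile)^{\frac n2}\circ R\circ\alpha^{\frac n2}$ for all even $n\ge2$; (iii) $-^nR=\alpha^{\frac{n+1}{2}}\circ(R^c)^\smile\circ(\alpha^\smile)^{\frac{n-1}{2}}$ for all odd $n\ge1$; (iv) $-^nR=\alpha^{\frac n2}\circ R\circ(\alpha^\smile)^{\frac n2}$ for all even $n\ge2$.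
   Context: For binary relations: converse $R^\smile=\{(x,y)\mid(y,x)\in R\}$; composition $R\circ S=\{(x,y)\mid\exists z\,((x,z)\in R,(z,y)\in S)\}$; $R^0=\mathrm{id}_X$, $R^{k+1}=R^k\circ R$. A function $\alpha$ is identified with its graph. For a poset $(X,\le)$ and an equivalence relation $E\supseteq{\le}$, $E$ is partially ordered by $(u,v)\preceq(x,y)$ iff $x\le u$ and $v\le y$; $\mathbf E=(E,\preceq)$ and $\mathsf{Up}(\mathbf E)$ is its set of up-sets. For $R\subseteq E$, $R^c=E\setminus R$. On $\mathsf{Up}(\mathbf E)$ define $R\backslash S=(R^\smile\circ S^c)^c$, $R/S=(R^c\circ S^\smile)^c$, ${\sim}R=R\backslash 0$, $-R=0/R$; ${\sim}^n$, $-^n$ are $n$-fold applications. An order automorphism is a bijection $\alpha$ with $x\le y\iff\alpha(x)\le\alpha(y)$. *)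

(* Defs.v *)
From Stdlib Require Import Arith.

Definition relX (X : Type) := X -> X -> Prop.

Definition rel_eq {X : Type} (R S : relX X) : Prop := forall x y, R x y <-> S x y.

Definition converse {X : Type} (R : relX X) : relX X := fun x y => R y x.

Definition rcomp {X : Type} (R S : relX X) : relX X :=
  fun x y => exists z, R x z /\ S z y.

Definition idrel (X : Type) : relX X := fun x y => x = y.

Fixpoint rpow {X : Type} (R : relX X) (k : nat) : relX X :=
  match k with
  | 0 => idrel X
  | S k' => rcomp (rpow R k') R
  end.

Definition graph {X : Type} (f : X -> X) : relX X := fun x y => y = f x.

Definition is_poset {X : Type} (le : relX X) : Prop :=
  (forall x, le x x) /\
  (forall x y, le x y -> le y x -> x = y) /\
  (forall x y z, le x y -> le y z -> le x z).

Definition is_equivalence {X : Type} (E : relX X) : Prop :=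
  (forall x, E x x) /\
  (forall x y, E x y -> E y x) /\
  (forall x y z, E x y -> E y z -> E x z).

Definition subrel {X : Type} (R S : relX X) : Prop := forall x y, R x y -> S x y.

Definition order_automorphism {X : Type} (le : relX X) (a : X -> X) : Prop :=
  (forall x y, a x = a y -> x = y) /\
  (forall y, exists x, a x = y) /\
  (forall x y, le x y <-> le (a x) (a y)).

(* complement relative to E : R^c = E \ R *)
Definition rcompl {X : Type} (E R : relX X) : relX X :=
  fun x y => E x y /\ ~ R x y.

(* up-sets of (E, preceq), where (u,v) preceq (x,y) iff x <= u and v <= y *)
Definition UpE {X : Type} (le E : relX X) (R : relX X) : Prop :=
  subrel R E /\
  (forall u v x y, R u v -> E x y -> le x u -> le v y -> R x y).

Definition ldiv {X : Type} (E R S : relX X) : relX X :=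
  rcompl E (rcomp (converse R) (rcompl E S)).
Definition rdiv {X : Type} (E R S : relX X) : relX X :=
  rcompl E (rcomp (rcompl E R) (converse S)).

Definition zero_rel {X : Type} (le E : relX X) (a : X -> X) : relX X :=
  rcomp (graph a) (converse (rcompl E le)).

Definition tilde {X : Type} (le E : relX X) (a : X -> X) (R : relX X) : relX X :=
  ldiv E R (zero_rel le E a).
Definition minus {X : Type} (le E : relX X) (a : X -> X) (R : relX X) : relX X :=
  rdiv E (zero_rel le E a) R.

Definition iter_op {X : Type} (f : relX X -> relX X) (n : nat) (R : relX X) : relX X :=
  Nat.iter n f R.

(* Main.v *)
Require Import Defs.
From Stdlib Require Import Arith Lia.

Lemma rpow_graph {X} (a : X -> X) k x y :
  rpow (graph a) k x y <-> y = Nat.iter k a x.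
Proof.
  revert y; induction k as [|k IH]; intros y; simpl.
  - unfold idrel; split; intro; congruence.
  - unfold rcomp, graph; split.
    + intros [z [H1 H2]]. apply IH in H1. subst; auto.
    + intros ->. exists (Nat.iter k a x). split; [apply IH|]; reflexivity.
Qed.

Lemma iter_succ_r {X} (a : X -> X) m y : Nat.iter (S m) a y = Nat.iter m a (a y).
Proof. induction m; simpl in *; congruence. Qed.

Lemma rpow_cgraph {X} (a : X -> X) k x y :
  rpow (converse (graph a)) k x y <-> x = Nat.iter k a y.
Proof.
  revert x y; induction k as [|k IH]; intros x y; simpl.
  - unfold idrel; split; intro; congruence.
  - unfold rcomp, graph, converse; split.
    + intros [z [H1 H2]]. apply IH in H1. subst. rewrite <- iter_succ_r; reflexivity.
    + intros ->. exists (a y). split; [apply IH; rewrite <- iter_succ_r|]; reflexivity.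
Qed.


Lemma tilde_step {X} (le E : relX X) a R :
  is_poset le -> is_equivalence E -> subrel le E -> order_automorphism le a -> subrel (graph a) E ->
  UpE le E R ->
  UpE le E (tilde le E a R) /\
  forall x y, tilde le E a R x y <-> exists w, y = a w /\ rcompl E R w x.
Proof.
  intros [Lr [La Lt]] [Er [Es Et]] LE [ai [as_ am]] Ea [RE Rup].
  assert (Eax : forall x, E x (a x)) by (intros; apply Ea; reflexivity).
  assert (key : forall x y, tilde le E a R x y <->
            E x y /\ forall z, R z x -> ~ le y (a z)).
  { intros x y; unfold tilde, ldiv, rcompl, rcomp, converse, zero_rel, rcomp, graph.
    split.
    - intros [Hxy Hn]; split; auto. intros z Hz Hle. apply Hn. exists z. split; auto.
      split. { eapply Et; [exact (RE _ _ Hz)|exact Hxy]. }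
      intros [z' [-> [_ Hc]]]. auto.
    - intros [Hxy Hn]; split; auto. intros [z [Hz [Hzy Hc]]]. apply Hc.
      exists (a z). split; auto. split.
      + eapply Et; [apply Es, Hzy|apply Eax].
      + intro Hl. exact (Hn z Hz Hl). }
  split.
  - split.
    + intros x y H. apply key in H. tauto.
    + intros u v x y H Hxy Hxu Hvy. apply key in H. apply key. destruct H as [Huv Hn].
      split; auto. intros z Hz Hle. apply (Hn z).
      * eapply Rup; [exact Hz| |apply Lr|exact Hxu].
        eapply Et; [apply RE, Hz|apply LE, Hxu].
      * eapply Lt; eauto.
  - intros x y. rewrite key. destruct (as_ y) as [w <-]. split.
    + intros [Hxy Hn]. exists w. split; auto. split.
      * eapply Et; [apply Eax|apply Es, Hxy].
      * intro Hw. apply (Hn w Hw). apply Lr.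
    + intros [w' [Hw [Ew Hnr]]]. apply ai in Hw. subst w'. split.
      * eapply Et; [apply Es, Ew|apply Eax].
      * intros z Hz Hle. apply Hnr. apply am in Hle.
        eapply Rup; [exact Hz| |exact Hle|apply Lr]. exact Ew.
Qed.

Lemma minus_step {X} (le E : relX X) a R :
  is_poset le -> is_equivalence E -> subrel le E -> order_automorphism le a -> subrel (graph a) E ->
  UpE le E R ->
  UpE le E (minus le E a R) /\
  forall x y, minus le E a R x y <-> rcompl E R y (a x).
Proof.
  intros [Lr [La Lt]] [Er [Es Et]] LE [ai [as_ am]] Ea [RE Rup].
  assert (Eax : forall x, E x (a x)) by (intros; apply Ea; reflexivity).
  assert (key : forall x y, minus le E a R x y <->
            E x y /\ forall z, R y z -> ~ le z (a x)).
  { intros x y; unfold minus, rdiv, rcompl, rcomp, converse, zero_rel, rcomp, graph.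
    split.
    - intros [Hxy Hn]; split; auto. intros z Hz Hle. apply Hn. exists z. split; auto.
      split. { eapply Et; [exact Hxy|apply RE, Hz]. }
      intros [z' [-> [_ Hc]]]. auto.
    - intros [Hxy Hn]; split; auto. intros [z [[Hxz Hc] Hz]]. apply Hc.
      exists (a x). split; auto. split.
      + eapply Et; [apply Es, Hxz|apply Eax].
      + intro Hl. exact (Hn z Hz Hl). }
  split.
  - split.
    + intros x y H. apply key in H. tauto.
    + intros u v x y H Hxy Hxu Hvy. apply key in H. apply key. destruct H as [Huv Hn].
      split; auto. intros z Hz Hle. apply (Hn z).
      * eapply Rup; [exact Hz| |exact Hvy|apply Lr].
        eapply Et; [apply LE, Hvy|apply RE, Hz].
      * eapply Lt; [exact Hle|]. apply (proj1 (am x u)), Hxu.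
  - intros x y. rewrite key. unfold rcompl. split.
    + intros [Hxy Hn]. split.
      * eapply Et; [apply Es, Hxy|apply Eax].
      * intro Hw. apply (Hn _ Hw). apply Lr.
    + intros [Ey Hnr]. split.
      * eapply Et; [apply Eax|apply Es, Ey].
      * intros z Hz Hle. apply Hnr.
        eapply Rup; [exact Hz|exact Ey|apply Lr|exact Hle].
Qed.

From Stdlib Require Import Classical.

Lemma tilde_all {X} (le E : relX X) a R :
  is_poset le -> is_equivalence E -> subrel le E -> order_automorphism le a ->
  subrel (graph a) E -> UpE le E R ->
  forall n, UpE le E (iter_op (tilde le E a) n R).
Proof.
  intros P Q L A G U n; induction n; simpl; auto.
  apply (tilde_step le E a _ P Q L A G IHn).
Qed.

Lemma minus_all {X} (le E : relX X) a R :
  is_poset le -> is_equivalence E -> subrel le E -> order_automorphism le a ->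
  subrel (graph a) E -> UpE le E R ->
  forall n, UpE le E (iter_op (minus le E a) n R).
Proof.
  intros P Q L A G U n; induction n; simpl; auto.
  apply (minus_step le E a _ P Q L A G IHn).
Qed.

Lemma tilde2 {X} (le E : relX X) a R :
  is_poset le -> is_equivalence E -> subrel le E -> order_automorphism le a ->
  subrel (graph a) E -> UpE le E R ->
  forall n x y, iter_op (tilde le E a) (S (S n)) R x y <->
    exists w w', x = a w' /\ y = a w /\ iter_op (tilde le E a) n R w' w.
Proof.
  intros P Q L A G U n x y.
  pose proof (tilde_all le E a R P Q L A G U) as TA.
  change (iter_op (tilde le E a) (S (S n)) R) with
    (tilde le E a (tilde le E a (iter_op (tilde le E a) n R))).
  destruct (tilde_step le E a _ P Q L A G (TA (S n))) as [_ H1].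
  destruct (tilde_step le E a _ P Q L A G (TA n)) as [_ H0].
  change (iter_op (tilde le E a) (S n) R) with (tilde le E a (iter_op (tilde le E a) n R)) in H1.
  destruct Q as [Er [Es Et]]. destruct A as [ai [as_ am]].
  assert (Eax : forall x, E x (a x)) by (intros; apply G; reflexivity).
  destruct (TA n) as [TE _].
  rewrite H1. split.
  - intros [w [-> [Ewx Hn]]]. destruct (as_ x) as [w' <-]. exists w, w'.
    split; auto. split; auto. apply NNPP. intro Hc. apply Hn. apply H0.
    exists w'. split; auto. split; auto.
    eapply Et; [apply Eax|apply Es, Ewx].
  - intros [w [w' [-> [-> HT]]]]. exists w. split; auto. split.
    + eapply Et; [apply Es, TE, HT|apply Eax].
    + intro Hc. apply H0 in Hc. destruct Hc as [w'' [Hw [_ Hn]]].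
      apply ai in Hw. subst. auto.
Qed.

Lemma minus2 {X} (le E : relX X) a R :
  is_poset le -> is_equivalence E -> subrel le E -> order_automorphism le a ->
  subrel (graph a) E -> UpE le E R ->
  forall n x y, iter_op (minus le E a) (S (S n)) R x y <->
    iter_op (minus le E a) n R (a x) (a y).
Proof.
  intros P Q L A G U n x y.
  pose proof (minus_all le E a R P Q L A G U) as TA.
  change (iter_op (minus le E a) (S (S n)) R) with
    (minus le E a (minus le E a (iter_op (minus le E a) n R))).
  destruct (minus_step le E a _ P Q L A G (TA (S n))) as [_ H1].
  destruct (minus_step le E a _ P Q L A G (TA n)) as [_ H0].
  change (iter_op (minus le E a) (S n) R) with (minus le E a (iter_op (minus le E a) n R)) in H1.
  destruct Q as [Er [Es Et]].
  assert (Eax : forall x, E x (a x)) by (intros; apply G; reflexivity).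
  destruct (TA n) as [TE _].
  rewrite H1. unfold rcompl. rewrite H0. unfold rcompl. split.
  - intros [Ey Hn]. apply NNPP. intro Hc. apply Hn. split; auto.
    eapply Et; [apply Es, Ey|apply Eax].
  - intros HT. split.
    + eapply Et; [apply Eax|apply Es, TE, HT].
    + intros [_ Hc]. auto.
Qed.

Lemma tilde_odd {X} (le E : relX X) a R :
  is_poset le -> is_equivalence E -> subrel le E -> order_automorphism le a ->
  subrel (graph a) E -> UpE le E R ->
  forall m x y, iter_op (tilde le E a) (2*m+1) R x y <->
    exists u v, x = Nat.iter m a u /\ y = Nat.iter (S m) a v /\ rcompl E R v u.
Proof.
  intros P Q L A G U m. induction m as [|m IH]; intros x y.
  - simpl. destruct (tilde_step le E a _ P Q L A G U) as [_ H]. rewrite H.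
    split.
    + intros [w [-> Hw]]. exists x, w. auto.
    + intros [u [v [-> [-> Hv]]]]. exists v. auto.
  - replace (2 * S m + 1) with (S (S (2*m+1))) by lia.
    rewrite (tilde2 le E a R P Q L A G U). split.
    + intros [w [w' [-> [-> HT]]]]. apply IH in HT.
      destruct HT as [u [v [-> [-> Hv]]]]. exists u, v. auto.
    + intros [u [v [-> [-> Hv]]]]. exists (Nat.iter (S m) a v), (Nat.iter m a u).
      split; auto. split; auto. apply IH. exists u, v. auto.
Qed.

Lemma tilde_even {X} (le E : relX X) a R :
  is_poset le -> is_equivalence E -> subrel le E -> order_automorphism le a ->
  subrel (graph a) E -> UpE le E R ->
  forall m x y, iter_op (tilde le E a) (2*m+2) R x y <->
    exists u v, x = Nat.iter (S m) a u /\ y = Nat.iter (S m) a v /\ R u v.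
Proof.
  intros P Q L A G U m. induction m as [|m IH]; intros x y.
  - rewrite (tilde2 le E a R P Q L A G U 0 x y). simpl. split; intros [p [q Hpq]]; exists q, p; tauto.
  - replace (2 * S m + 2) with (S (S (2*m+2))) by lia.
    rewrite (tilde2 le E a R P Q L A G U). split.
    + intros [w [w' [-> [-> HT]]]]. apply IH in HT.
      destruct HT as [u [v [-> [-> Hv]]]]. exists u, v. auto.
    + intros [u [v [-> [-> Hv]]]]. exists (Nat.iter (S m) a v), (Nat.iter (S m) a u).
      split; auto. split; auto. apply IH. exists u, v. auto.
Qed.

Lemma minus_odd {X} (le E : relX X) a R :
  is_poset le -> is_equivalence E -> subrel le E -> order_automorphism le a ->
  subrel (graph a) E -> UpE le E R ->
  forall m x y, iter_op (minus le E a) (2*m+1) R x y <->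
    rcompl E R (Nat.iter m a y) (Nat.iter (S m) a x).
Proof.
  intros P Q L A G U m. induction m as [|m IH]; intros x y.
  - simpl. destruct (minus_step le E a _ P Q L A G U) as [_ H]. apply H.
  - replace (2 * S m + 1) with (S (S (2*m+1))) by lia.
    rewrite (minus2 le E a R P Q L A G U), IH.
    rewrite <- !iter_succ_r. reflexivity.
Qed.

Lemma minus_even {X} (le E : relX X) a R :
  is_poset le -> is_equivalence E -> subrel le E -> order_automorphism le a ->
  subrel (graph a) E -> UpE le E R ->
  forall m x y, iter_op (minus le E a) (2*m+2) R x y <->
    R (Nat.iter (S m) a x) (Nat.iter (S m) a y).
Proof.
  intros P Q L A G U m. induction m as [|m IH]; intros x y.
  - exact (minus2 le E a R P Q L A G U 0 x y).
  - replace (2 * S m + 2) with (S (S (2*m+2))) by lia.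
    rewrite (minus2 le E a R P Q L A G U), IH.
    rewrite <- !iter_succ_r. reflexivity.
Qed.

Lemma odd_ex n : Nat.odd n = true -> exists m, n = 2*m+1.
Proof. intro H. apply Nat.odd_spec in H. destruct H as [m Hm]. exists m. lia. Qed.

Lemma even_ex n : Nat.even n = true -> 2 <= n -> exists m, n = 2*m+2.
Proof. intros H H2. apply Nat.even_spec in H. destruct H as [m Hm]. exists (m-1). lia. Qed.

Lemma div_odd1 m : (2*m+1-1)/2 = m.
Proof. replace (2*m+1-1) with (m*2) by lia. apply Nat.div_mul. lia. Qed.
Lemma div_odd2 m : (2*m+1+1)/2 = S m.
Proof. replace (2*m+1+1) with (S m*2) by lia. apply Nat.div_mul. lia. Qed.
Lemma div_even m : (2*m+2)/2 = S m.
Proof. replace (2*m+2) with (S m*2) by lia. apply Nat.div_mul. lia. Qed.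

Theorem lemma3p11 (X : Type) (le E : X -> X -> Prop) (a : X -> X) :
  is_poset le ->
  is_equivalence E ->
  subrel le E ->
  order_automorphism le a ->
  subrel (graph a) E ->
  forall R : X -> X -> Prop, UpE le E R ->
    (forall n, Nat.odd n = true ->
       rel_eq (iter_op (tilde le E a) n R)
         (rcomp (rcomp (rpow (converse (graph a)) ((n - 1) / 2))
                       (converse (rcompl E R)))
                (rpow (graph a) ((n + 1) / 2)))) /\
    (forall n, Nat.even n = true -> 2 <= n ->
       rel_eq (iter_op (tilde le E a) n R)
         (rcomp (rcomp (rpow (converse (graph a)) (n / 2)) R)
                (rpow (graph a) (n / 2)))) /\
    (forall n, Nat.odd n = true ->
       rel_eq (iter_op (minus le E a) n R)
         (rcomp (rcomp (rpow (graph a) ((n + 1) / 2))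
                       (converse (rcompl E R)))
                (rpow (converse (graph a)) ((n - 1) / 2)))) /\
    (forall n, Nat.even n = true -> 2 <= n ->
       rel_eq (iter_op (minus le E a) n R)
         (rcomp (rcomp (rpow (graph a) (n / 2)) R)
                (rpow (converse (graph a)) (n / 2)))).
Proof.
  intros P Q L A G R U. split; [|split; [|split]].
  - intros n Hn. destruct (odd_ex n Hn) as [m ->]. rewrite div_odd1, div_odd2.
    intros x y. rewrite (tilde_odd le E a R P Q L A G U). unfold rcomp, converse.
    split.
    + intros [u [v [-> [-> Hv]]]]. exists v. split.
      * exists u. split; auto. apply rpow_cgraph. reflexivity.
      * apply rpow_graph. reflexivity.
    + intros [z [[z' [H1 H2]] H3]]. apply rpow_cgraph in H1. apply rpow_graph in H3.
      exists z', z. auto.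
  - intros n Hn H2. destruct (even_ex n Hn H2) as [m ->]. rewrite div_even.
    intros x y. rewrite (tilde_even le E a R P Q L A G U). unfold rcomp.
    split.
    + intros [u [v [-> [-> Hv]]]]. exists v. split.
      * exists u. split; auto. apply rpow_cgraph. reflexivity.
      * apply rpow_graph. reflexivity.
    + intros [z [[z' [H1 H2']] H3]]. apply rpow_cgraph in H1. apply rpow_graph in H3.
      exists z', z. auto.
  - intros n Hn. destruct (odd_ex n Hn) as [m ->]. rewrite div_odd1, div_odd2.
    intros x y. rewrite (minus_odd le E a R P Q L A G U). unfold rcomp, converse.
    split.
    + intros Hv. exists (Nat.iter m a y). split.
      * exists (Nat.iter (S m) a x). split; auto. apply rpow_graph. reflexivity.
      * apply rpow_cgraph. reflexivity.
    + intros [z [[z' [H1 H2]] H3]]. apply rpow_graph in H1. apply rpow_cgraph in H3.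
      subst. auto.
  - intros n Hn H2. destruct (even_ex n Hn H2) as [m ->]. rewrite div_even.
    intros x y. rewrite (minus_even le E a R P Q L A G U). unfold rcomp.
    split.
    + intros Hv. exists (Nat.iter (S m) a y). split.
      * exists (Nat.iter (S m) a x). split; auto. apply rpow_graph. reflexivity.
      * apply rpow_cgraph. reflexivity.
    + intros [z [[z' [H1 H2']] H3]]. apply rpow_graph in H1. apply rpow_cgraph in H3.
      subst. auto.
Qed.
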